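(* Let $G=(V,E)$ be a finite graph of maximum degree $\Delta$, and for $u\in V$ let $d_u$ denote the degree of $u$. Let $\boldsymbol\lambda\in[0,\infty)^{V}$ satisfy $\lambda_u<1/\Delta$ for all $u\in V$. Then \[ \mathbb{E}_{G,\boldsymbol\lambda}|I| \;\ge\; \sum_{u\in V}\frac{\lambda_u}{1+(d_u+1)\lambda_u}. \]
   Context: For a graph $G=(V,E)$, $\mathcal I(G)$ denotes the set of independent sets of $G$ (including $\emptyset$). For a fugacity vector $\boldsymbol\lambda\in[0,\infty)^V$, the hard-core model is the probability measure on $\mathcal I(G)$ given by $\Pr_{G,\boldsymbol\lambda}(I)=\frac{1}{Z_G(\boldsymbol\lambda)}\prod_{v\in I}\lambda_v$, where $Z_G(\boldsymbol\lambda)=\sum_{J\in\mathcal I(G)}\prod_{v\in J}\lambda_v$. $\mathbb{E}_{G,\boldsymbol\lambda}$ denotes expectation with respect to this measure, and $I$ denotes the random independent set. *)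

(* Defs.v *)
From mathcomp Require Import all_boot all_order all_algebra.
Set Implicit Arguments. Unset Strict Implicit. Unset Printing Implicit Defensive.
Import Order.TTheory GRing.Theory Num.Theory.
Local Open Scope ring_scope.

Definition simple_graph (T : finType) (e : rel T) : Prop :=
  symmetric e /\ irreflexive e.

Definition deg (T : finType) (e : rel T) (u : T) : nat := #|[set v | e u v]|.

Definition maxdeg (T : finType) (e : rel T) : nat := (\max_(u : T) deg e u)%N.

Definition independent (T : finType) (e : rel T) (I : {set T}) : bool :=
  [forall u in I, forall v in I, ~~ e u v].

Definition hc_weight (R : numFieldType) (T : finType) (lam : T -> R) (I : {set T}) : R :=
  \prod_(v in I) lam v.

Definition hc_Z (R : numFieldType) (T : finType) (e : rel T) (lam : T -> R) : R :=
  \sum_(I : {set T} | independent e I) hc_weight lam I.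

Definition hc_prob (R : numFieldType) (T : finType) (e : rel T) (lam : T -> R)
  (I : {set T}) : R :=
  if independent e I then hc_weight lam I / hc_Z e lam else 0.

Definition hc_expected_size (R : numFieldType) (T : finType) (e : rel T)
  (lam : T -> R) : R :=
  \sum_(I : {set T} | independent e I) (#|I|%:R * hc_prob e lam I).

(* Main.v *)
Require Import Defs.
From mathcomp Require Import all_boot all_order all_algebra.
From mathcomp Require Import ring lra.
Import Order.TTheory GRing.Theory Num.Theory.
Local Open Scope ring_scope.
Set Implicit Arguments. Unset Strict Implicit. Unset Printing Implicit Defensive.


Definition nb (T : finType) (e : rel T) (v u : T) : bool := (u == v) || e v u.

Lemma sum_sym (R : comRingType) (T : finType) (r : rel T) (a b : T -> R) :
  symmetric r ->
  \sum_v a v * \sum_(u | r v u) b u = \sum_v b v * \sum_(u | r v u) a u.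
Proof.
move=> sr.
transitivity (\sum_v \sum_u (if r v u then a v * b u else 0)).
  by apply: eq_bigr => v _; rewrite mulr_sumr big_mkcond.
rewrite exchange_big /=; apply: eq_bigr => u _.
rewrite mulr_sumr [RHS]big_mkcond; apply: eq_bigr => v _.
by rewrite sr; case: (r u v) => //; rewrite mulrC.
Qed.

Lemma nb_sym (T : finType) (e : rel T) : symmetric e -> symmetric (nb e).
Proof. by move=> se v u; rewrite /nb eq_sym se. Qed.

Lemma Cs_split (R : comRingType) (T : finType) (e : rel T) (x : T -> R) v :
  irreflexive e -> \sum_(u | nb e v u) x u = x v + \sum_(u | e v u) x u.
Proof.
move=> ir; rewrite (bigD1 v) /nb ?eqxx //=; congr (_ + _).
apply: eq_bigl => u; case: eqP => [->|_] /=; first by rewrite ir.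
by rewrite andbT.
Qed.

Lemma Ns_const (R : comRingType) (T : finType) (e : rel T) (c : R) v :
  \sum_(u | e v u) c = (deg e v)%:R * c.
Proof.
rewrite /deg -(@eq_bigl _ _ _ _ _ (fun u => u \in [set u | e v u])); last by move=> u; rewrite inE.
by rewrite sumr_const mulr_natl.
Qed.

Lemma Ns_le (R : realFieldType) (T : finType) (e : rel T) (x : T -> R) (M : R) v :
  (forall u, x u <= M) -> \sum_(u | e v u) x u <= (deg e v)%:R * M.
Proof. by move=> H; rewrite -Ns_const; apply: ler_sum => u _. Qed.

Lemma Ns_ge (R : realFieldType) (T : finType) (e : rel T) (x : T -> R) (M : R) v :
  (forall u, M <= x u) -> (deg e v)%:R * M <= \sum_(u | e v u) x u.
Proof. by move=> H; rewrite -Ns_const; apply: ler_sum => u _. Qed.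

Lemma quad_bounds (R : realFieldType) (T : finType) (e : rel T) (a : T -> R) :
  symmetric e ->
  - \sum_v (deg e v)%:R * a v ^+ 2 <= \sum_v a v * \sum_(u | e v u) a u /\
  \sum_v a v * \sum_(u | e v u) a u <= \sum_v (deg e v)%:R * a v ^+ 2.
Proof.
move=> se.
set D := \sum_v (deg e v)%:R * a v ^+ 2.
have E1 : \sum_v \sum_(u | e v u) a u ^+ 2 = D.
  have H := sum_sym (fun _ => 1) (fun u => a u ^+ 2) se.
  transitivity (\sum_v 1 * \sum_(u | e v u) a u ^+ 2).
    by apply: eq_bigr => v _; rewrite mul1r.
  rewrite H; apply: eq_bigr => v _; rewrite (Ns_const e (1:R)) mulr1 mulrC //.
have E2 : \sum_v \sum_(u | e v u) a v ^+ 2 = D.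
  by apply: eq_bigr => v _; rewrite Ns_const.
have E3 : \sum_v a v * \sum_(u | e v u) a u = \sum_v \sum_(u | e v u) a v * a u.
  by apply: eq_bigr => v _; rewrite mulr_sumr.
have E4 : \sum_v \sum_(u | e v u) (a u ^+ 2 + a v ^+ 2) = D + D.
  rewrite -{1}E1 -E2 -big_split /=; apply: eq_bigr => v _; by rewrite big_split.
set S := \sum_v a v * \sum_(u | e v u) a u.
have E5 : \sum_v \sum_(u | e v u) (2%:R * (a v * a u)) = 2%:R * S.
  by rewrite /S E3 mulr_sumr; apply: eq_bigr => v _; rewrite mulr_sumr.
have P1 : 0 <= (D + D) + 2%:R * S.
  rewrite -E4 -E5 -big_split; apply: sumr_ge0 => v _; rewrite -big_split.
  apply: sumr_ge0 => u _.
  have := sqr_ge0 (a u + a v); rewrite sqrrD mulr2n (mulrC (a u)) /=; lra.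
have P2 : 0 <= (D + D) - 2%:R * S.
  rewrite -E4 -E5 -sumrB; apply: sumr_ge0 => v _; rewrite -sumrB.
  apply: sumr_ge0 => u _.
  have := sqr_ge0 (a u - a v); rewrite sqrrB mulr2n (mulrC (a u)) /=; lra.
split; lra.
Qed.



Lemma deg_le (T : finType) (e : rel T) v : (deg e v <= maxdeg e)%N.
Proof. by rewrite /maxdeg; apply: (leq_bigmax v). Qed.

Lemma lamdeg (R : realFieldType) (T : finType) (e : rel T) (lam : T -> R) v :
  (forall u, 0 <= lam u) -> (forall u, lam u * (maxdeg e)%:R < 1) ->
  lam v * (deg e v)%:R < 1.
Proof.
move=> l0 l1; apply: le_lt_trans (l1 v).
by apply: ler_wpM2l => //; rewrite ler_nat deg_le.
Qed.

Lemma inj_sys (R : realFieldType) (T : finType) (e : rel T) (lam : T -> R) (y : T -> R) :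
  simple_graph e -> (forall u, 0 <= lam u) -> (forall u, lam u * (maxdeg e)%:R < 1) ->
  (forall v, y v + lam v * \sum_(u | nb e v u) y u = 0) -> forall v, y v = 0.
Proof.
move=> [se ir] l0 l1 H v.
pose u := [arg max_(i > v) `|y i|]%O.
have Hu : forall i, `|y i| <= `|y u|.
  rewrite /u; case: arg_maxP => //= w _ Hw i; exact: Hw.
have Nb : `|\sum_(i | e u i) y i| <= (deg e u)%:R * `|y u|.
  apply: le_trans (ler_norm_sum _ _ _) _; exact: Ns_le.
have Eu := H u; rewrite Cs_split // in Eu.
have E2 : y u * (1 + lam u) = - (lam u * \sum_(i | e u i) y i).
  by apply/eqP; rewrite -addr_eq0; apply/eqP; rewrite -[in RHS]Eu; ring.
have E3 : `|y u| * (1 + lam u) = lam u * `|\sum_(i | e u i) y i|.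
  have h1 : 0 <= 1 + lam u by have := l0 u; lra.
  by rewrite -(ger0_norm h1) -normrM E2 normrN normrM ger0_norm.
have hdu := @lamdeg R T e lam u l0 l1.
have l0u := l0 u.
have n0 : 0 <= `|y u| by [].
have : `|y u| * (1 + lam u) <= lam u * ((deg e u)%:R * `|y u|).
  by rewrite E3; apply: ler_wpM2l.
move=> Hle.
have : `|y u| <= 0 by nra.
move=> h0; apply/normr0_eq0/eqP; rewrite eq_le normr_ge0 andbT.
exact: le_trans (Hu v) h0.
Qed.

Lemma exists_sol0 (R : realFieldType) (T : finType) (e : rel T) (lam : T -> R) :
  simple_graph e -> (forall u, 0 <= lam u) -> (forall u, lam u * (maxdeg e)%:R < 1) ->
  exists x : T -> R, forall v, x v + lam v * \sum_(u | nb e v u) x u = lam v.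
Proof.
move=> sg l0 l1.
pose n := #|T|.
pose B : 'M[R]_n := \matrix_(i, j) ((i == j)%:R + lam (enum_val j) * (nb e (enum_val j) (enum_val i))%:R).
have mulB : forall (X : 'rV[R]_n) j, (X *m B) 0 j =
    X 0 j + lam (enum_val j) * \sum_(u | nb e (enum_val j) u) X 0 (enum_rank u).
  move=> X j; rewrite !mxE.
  under eq_bigr do rewrite mxE mulrDr.
  rewrite big_split /=; congr (_ + _).
    rewrite (bigD1 j) //= eqxx mulr1 big1 ?addr0 // => i /negbTE ->; by rewrite mulr0.
  have EV : forall F : T -> R, \sum_u F u = \sum_(i < n) F (enum_val i).
    by move=> F; rewrite -big_enum_val.
  rewrite [in RHS]big_mkcond mulr_sumr EV; apply: eq_bigr => i _.
  rewrite enum_valK; case: (nb _ _ _) => /=; rewrite ?mulr1 ?mulr0 //; ring.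
have inj : forall X : 'rV[R]_n, X *m B = 0 -> X = 0.
  move=> X HX.
  have H := @inj_sys R T e lam (fun u => X 0 (enum_rank u)) sg l0 l1.
  have H2 : forall v, X 0 (enum_rank v) = 0.
    apply: H => v; have := mulB X (enum_rank v).
    by rewrite HX enum_rankK mxE => <-.
  by apply/rowP => j; rewrite mxE -(enum_valK j) H2.
have uB : B \in unitmx.
  rewrite unitmxE unitfE; apply/negP => /det0P [X nz HX].
  by move/negP: nz; apply; rewrite (inj X HX).
pose Lr : 'rV[R]_n := \row_j lam (enum_val j).
exists (fun u => (Lr *m invmx B) 0 (enum_rank u)) => v.
have := mulB (Lr *m invmx B) (enum_rank v).
by rewrite mulmxKV // mxE enum_rankK => <-.
Qed.

Lemma sol_nonneg (R : realFieldType) (T : finType) (e : rel T) (lam x : T -> R) :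
  simple_graph e -> (forall u, 0 <= lam u) -> (forall u, lam u * (maxdeg e)%:R < 1) ->
  (forall v, x v + lam v * \sum_(u | nb e v u) x u = lam v) -> forall v, 0 <= x v.
Proof.
move=> [se ir] l0 l1 H v; rewrite leNgt; apply/negP => neg.
pose u := [arg min_(i < v) x i]%O.
pose w := [arg max_(i > v) x i]%O.
have Hu : forall i, x u <= x i by rewrite /u; case: arg_minP => //= z _ Hz i; exact: Hz.
have Hw : forall i, x i <= x w by rewrite /w; case: arg_maxP => //= z _ Hz i; exact: Hz.
have Eu := H u; have Ew := H w; rewrite Cs_split // in Eu; rewrite Cs_split // in Ew.
have N1 := Ns_le e u Hw; have N2 := Ns_ge e w Hu.
have m0 : x u < 0 by apply: le_lt_trans (Hu v) neg.
have a0 := l0 u; have b0 := l0 w.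
have aq : lam u * (deg e w)%:R < 1.
  apply: le_lt_trans (l1 u); by apply: ler_wpM2l => //; rewrite ler_nat deg_le.
have bp : lam w * (deg e u)%:R < 1.
  apply: le_lt_trans (l1 w); by apply: ler_wpM2l => //; rewrite ler_nat deg_le.
have p0 : 0 <= (deg e u)%:R :> R by [].
have q0 : 0 <= (deg e w)%:R :> R by [].
move: Eu Ew N1 N2 aq bp p0 q0 m0 a0 b0.
set m := x u; set M := x w; set a := lam u; set b := lam w.
set S1 := \sum_(i | e u i) x i; set S2 := \sum_(i | e w i) x i.
set p := (deg e u)%:R; set q := (deg e w)%:R.
move=> Eu Ew N1 N2 aq bp p0 q0 m0 a0 b0.
have e5 : m * (1 + a) = a * (1 - S1) by nra.
have e6 : M * (1 + b) = b * (1 - S2) by nra.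
have h6 : m * (1 + a - a * q) < 0.
  have : 0 < 1 + a - a * q by nra.
  nra.
case: (ltP M 0) => hM.
  have : S1 <= 0 by nra.
  nra.
have h1 : p * (M * (1 + b)) <= p * (b * (1 - q * m)) by rewrite e6; apply: ler_wpM2l => //; nra.
have hq : 0 <= 1 - q * m by nra.
have hpb : 0 <= 1 - b * p by lra.
have h2' := mulr_ge0 hpb hq.
have h2 : p * b * (1 - q * m) <= 1 - q * m by nra.
have h3' := mulr_ge0 (mulr_ge0 p0 hM) b0.
have h3 : p * M <= p * (M * (1 + b)) by nra.
have h4 : a * q * m <= a * (1 - S1) by nra.
nra.
Qed.



Lemma sum_ge_f (R : realFieldType) (T : finType) (e : rel T) (lam x : T -> R) :
  simple_graph e -> (forall u, 0 <= lam u) -> (forall u, lam u * (maxdeg e)%:R < 1) ->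
  (forall v, x v + lam v * \sum_(u | nb e v u) x u = lam v) ->
  \sum_(u : T) lam u / (1 + (deg e u).+1%:R * lam u) <= \sum_u x u.
Proof.
move=> [se ir] l0 l1 H.
pose f v := lam v / (1 + (deg e v).+1%:R * lam v).
pose d1 v : R := (deg e v).+1%:R.
pose Cs (y : T -> R) v := \sum_(u | nb e v u) y u.
pose h v := d1 v * f v - Cs f v.
pose w v := x v - f v.
have den : forall v, 0 < 1 + d1 v * lam v.
  move=> v; have := l0 v; have : 0 <= d1 v by rewrite ler0n.
  nra.
have Ff : forall v, f v * (1 + d1 v * lam v) = lam v.
  move=> v; rewrite /f mulfVK //; have := den v; by rewrite /d1 => /gt_eqF ->.
have f0 : forall v, 0 <= f v by move=> v; rewrite /f divr_ge0 // ltW //; exact: den v.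
have I1 : forall v, x v * d1 v * f v - f v * Cs x v = x v - f v.
  move=> v; have Hv := H v; rewrite -/(Cs x v) in Hv.
  have e0 : lam v * Cs x v = lam v - x v by lra.
  have hk : (1 + d1 v * lam v)^-1 * (1 + d1 v * lam v) = 1.
    by rewrite mulVf //; have := den v => /gt_eqF ->.
  have fe : f v = lam v * (1 + d1 v * lam v)^-1 by [].
  rewrite fe.
  move: hk e0; set k := (1 + d1 v * lam v)^-1; set L := lam v; set C := Cs x v; set D := d1 v; set X := x v.
  move=> hk e0.
  have e2 : L * k * C = k * (L - X) by rewrite -e0; ring.
  rewrite e2; transitivity (X * (k * (1 + D * L)) - L * k); first by ring.
  by rewrite hk; ring.
have SX : \sum_v x v * h v = \sum_v x v - \sum_v f v.
  rewrite -sumrB -(eq_bigr _ (fun v _ => I1 v)) sumrB.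
  have S := sum_sym x f (nb_sym se).
  rewrite /h; under eq_bigr do rewrite mulrBr.
  rewrite sumrB; congr (_ - _).
    by apply: eq_bigr => v _; ring.
  by rewrite S.
have CsB : forall v, Cs w v = Cs x v - Cs f v by move=> v; rewrite /Cs -sumrB.
have d1E : forall v, d1 v = (deg e v)%:R + 1 by move=> v; rewrite /d1 natr1.
have hw : forall v, w v * h v = w v * (w v * (lam v)^-1 + Cs w v).
  move=> v; have [L0|Lne] := eqVneq (lam v) 0.
    have x0 : x v = 0 by have := H v; rewrite L0 mul0r addr0.
    have fz : f v = 0 by rewrite /f L0 mul0r.
    by rewrite /w x0 fz subrr !mul0r.
  congr (_ * _).
  have Hv := H v; have Fv := Ff v.
  apply: (mulfI Lne).
  rewrite [in RHS]mulrDr mulrCA divff // mulr1 CsB /w /h.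
  move: Hv Fv; rewrite -/(Cs x v).
  set L := lam v; set X := x v; set F := f v; set C := Cs x v; set G := Cs f v; set D := d1 v.
  move=> Hv Fv; nra.
have Qge : 0 <= \sum_v w v * h v.
  rewrite (eq_bigr _ (fun v _ => hw v)).
  have [qb _] := quad_bounds w se.
  have E : \sum_v w v * (w v * (lam v)^-1 + Cs w v) =
      \sum_v (w v ^+ 2 * ((lam v)^-1 + 1)) + \sum_v w v * \sum_(u | e v u) w u.
    rewrite -big_split; apply: eq_bigr => v _ /=; rewrite /Cs Cs_split //; ring.
  rewrite E.
  have : \sum_v (deg e v)%:R * w v ^+ 2 <= \sum_v (w v ^+ 2 * ((lam v)^-1 + 1)).
    apply: ler_sum => v _.
    have [L0|Lne] := eqVneq (lam v) 0.
      have x0 : x v = 0 by have := H v; rewrite L0 mul0r addr0.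
      have fz : f v = 0 by rewrite /f L0 mul0r.
      by rewrite /w x0 fz subrr expr0n /= mulr0 mul0r.
    have Lp : 0 < lam v by rewrite lt_def Lne l0.
    have hd := @lamdeg R T e lam v l0 l1.
    have : (deg e v)%:R <= (lam v)^-1.
      rewrite -(@ler_pM2l _ (lam v)) // mulfV //; exact: ltW.
    have := sqr_ge0 (w v); set W := w v ^+ 2; set I := (lam v)^-1; set Dg := (deg e v)%:R.
    nra.
  lra.
have Fge : 0 <= \sum_v f v * h v.
  have [_ qb] := quad_bounds f se.
  have E : \sum_v f v * h v = \sum_v (deg e v)%:R * f v ^+ 2 - \sum_v f v * \sum_(u | e v u) f u.
    rewrite -sumrB; apply: eq_bigr => v _ /=; rewrite /h /Cs Cs_split // d1E; ring.
  rewrite E; lra.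
have : \sum_v x v * h v = \sum_v w v * h v + \sum_v f v * h v.
  by rewrite -big_split; apply: eq_bigr => v _ /=; rewrite /w; ring.
rewrite SX; lra.
Qed.



Lemma indepP (T : finType) (e : rel T) (I : {set T}) :
  reflect (forall a b, a \in I -> b \in I -> ~~ e a b) (independent e I).
Proof.
apply: (iffP forallP) => [H a b aI bI | H a].
  by move: (H a); rewrite aI /= => /forallP/(_ b); rewrite bI.
apply/implyP => aI; apply/forallP => b; apply/implyP => bI; exact: H.
Qed.

Lemma w_ge0 (R : realFieldType) (T : finType) (lam : T -> R) I :
  (forall u, 0 <= lam u) -> 0 <= hc_weight lam I.
Proof. by move=> l0; apply: prodr_ge0 => v _. Qed.

Lemma Z_gt0 (R : realFieldType) (T : finType) (e : rel T) (lam : T -> R) :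
  (forall u, 0 <= lam u) -> 0 < hc_Z e lam.
Proof.
move=> l0; rewrite /hc_Z (bigD1 set0) /=; last by apply/indepP => a b; rewrite inE.
rewrite /hc_weight big_set0; apply: lt_le_trans (ltr01) _.
rewrite lerDl; apply: sumr_ge0 => I _; exact: w_ge0.
Qed.

Definition Zin (R : realFieldType) (T : finType) (e : rel T) (lam : T -> R) u :=
  \sum_(I : {set T} | independent e I && (u \in I)) hc_weight lam I.
Definition Zout (R : realFieldType) (T : finType) (e : rel T) (lam : T -> R) u :=
  \sum_(I : {set T} | independent e I && [forall v, nb e u v ==> (v \notin I)]) hc_weight lam I.

Lemma EZ (R : realFieldType) (T : finType) (e : rel T) (lam : T -> R) :
  (forall u, 0 <= lam u) -> hc_expected_size e lam * hc_Z e lam = \sum_u Zin e lam u.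
Proof.
move=> l0; have Zn : hc_Z e lam != 0 by rewrite gt_eqF // Z_gt0.
rewrite /hc_expected_size mulr_suml.
transitivity (\sum_(I : {set T} | independent e I) \sum_u (if u \in I then hc_weight lam I else 0)).
  apply: eq_bigr => I iI; rewrite /hc_prob iI mulrA mulfVK //.
  by rewrite -big_mkcond /= sumr_const mulr_natl.
rewrite exchange_big /=; apply: eq_bigr => u _; by rewrite /Zin big_mkcondr.
Qed.

Lemma cond_eq (T : finType) (e : rel T) u (J : {set T}) :
  symmetric e -> irreflexive e ->
  [&& independent e (u |: J), u \in u |: J & ((u |: J) :\ u == J)] =
  independent e J && [forall v, nb e u v ==> (v \notin J)].
Proof.
move=> se ir.
have E1 : ((u |: J) :\ u == J) = (u \notin J).
  case uJ: (u \in J) => /=.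
    by apply/negbTE/eqP => E; move: uJ; rewrite -E !inE eqxx.
  by rewrite setU1K ?uJ // eqxx.
rewrite setU11 E1 /=.
apply/idP/idP.
  move=> /andP [/indepP iU uJ]; apply/andP; split.
    by apply/indepP => a b aJ bJ; apply: iU; rewrite !inE ?aJ ?bJ orbT.
  apply/forallP => v; apply/implyP; rewrite /nb => /orP [/eqP -> //|euv].
  apply/negP => vJ; move: (iU u v); rewrite !inE eqxx vJ orbT euv.
  by move=> /(_ isT isT).
move=> /andP [/indepP iJ /forallP nJ].
have uJ : u \notin J by have := nJ u; rewrite /nb eqxx.
rewrite uJ andbT; apply/indepP => a b; rewrite !inE.
have nb1 : forall c, c \in J -> ~~ e u c.
  move=> c cJ; apply/negP => euc; have := nJ c; rewrite /nb euc orbT cJ.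
  done.
move=> /orP [/eqP ->|aJ] /orP [/eqP ->|bJ].
- by rewrite ir.
- exact: nb1.
- by rewrite se; apply: nb1.
- exact: iJ.
Qed.

Lemma Zin_out (R : realFieldType) (T : finType) (e : rel T) (lam : T -> R) u :
  simple_graph e -> Zin e lam u = lam u * Zout e lam u.
Proof.
move=> [se ir]; rewrite /Zin /Zout.
rewrite (reindex_onto (fun J => u |: J) (fun I => I :\ u)); last first.
  by move=> I /andP [_ uI]; rewrite setD1K.
rewrite mulr_sumr; apply: eq_big => J; first by rewrite -andbA cond_eq.
rewrite -andbA cond_eq // => /andP [_ /forallP nJ].
have uJ : u \notin J by have := nJ u; rewrite /nb eqxx.
by rewrite /hc_weight big_setU1.
Qed.

Lemma Z_le (R : realFieldType) (T : finType) (e : rel T) (lam : T -> R) u :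
  (forall u, 0 <= lam u) ->
  hc_Z e lam <= Zout e lam u + \sum_(v | nb e u v) Zin e lam v.
Proof.
move=> l0; rewrite /Zout /Zin big_mkcondr.
under [X in _ <= _ + X]eq_bigr do rewrite big_mkcondr.
rewrite exchange_big /= -big_split /=; apply: ler_sum => I _.
have w0 := w_ge0 I l0.
case: ifP => [_|].
  by rewrite lerDl; apply: sumr_ge0 => v _; case: ifP.
move/negbT; rewrite negb_forall => /existsP [v]; rewrite negb_imply negbK => /andP [nuv vI].
rewrite add0r (bigD1 v) //= vI lerDl; apply: sumr_ge0 => z _; by case: ifP.
Qed.

Theorem theorem1p1 (R : realFieldType) (T : finType) (e : rel T)
  (lam : T -> R) :
  simple_graph e ->
  (forall u, 0 <= lam u) ->
  (forall u, lam u * (maxdeg e)%:R < 1) ->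
  \sum_(u : T) lam u / (1 + (deg e u).+1%:R * lam u) <= hc_expected_size e lam.
Proof.
move=> sg l0 l1.
have [x Hx] := exists_sol0 sg l0 l1.
have x0 := sol_nonneg sg l0 l1 Hx.
apply: le_trans (sum_ge_f sg l0 l1 Hx) _.
have Zp := Z_gt0 e l0.
rewrite -(ler_pM2r Zp) EZ //.
have [se ir] := sg.
have Id : \sum_u x u * (Zout e lam u + \sum_(v | nb e u v) Zin e lam v) = \sum_u Zin e lam u.
  transitivity (\sum_u x u * Zout e lam u + \sum_u x u * \sum_(v | nb e u v) (lam v * Zout e lam v)).
    rewrite -big_split; apply: eq_bigr => u _ /=; rewrite mulrDr; congr (_ + _).
    by congr (_ * _); apply: eq_bigr => v _; rewrite Zin_out.
  rewrite (sum_sym x (fun v => lam v * Zout e lam v) (nb_sym se)) -big_split.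
  apply: eq_bigr => u _ /=; rewrite Zin_out //.
  have := Hx u; set C := \sum_(v | nb e u v) x v => Hu.
  rewrite -[in RHS]Hu; ring.
rewrite -Id mulr_suml; apply: ler_sum => u _.
apply: ler_wpM2l => //; exact: Z_le.
Qed.
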